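(* For $i\ge1$ let $x_i=(1+\alpha)\Gamma(2+\alpha)\frac{\Gamma(i)}{\Gamma(2+\alpha+i)}$, $\alpha=k/\lambda$, and set $x_0=0$. Then for all $i,j\ge1$, as $n\to\infty$, $$x^{(n)}_i=x_i+O(n^{-1}),\qquad (nk)^{-2}\mathbf E X^{(n)}_iX^{(n)}_j=x_ix_j+O(n^{-1}).$$ Moreover, for all $i,j\ge1$ the finite limits $h_{i,j}=\lim_{n\to\infty}h^{(n)}_{i,j}$ exist; they are symmetric ($h_{i,j}=h_{j,i}$) and, with the convention $h_{i,j}=0$ when $\min\{i,j\}=0$, satisfy $$h_{i,i}=\frac{2(i-1)h_{i,i-1}+ix_i+(i-1)x_{i-1}}{2i+1+\alpha},\qquad h_{i,i+1}=\frac{(i-1)h_{i-1,i+1}+ih_{i,i}-ix_i}{2i+2+\alpha},$$ $$h_{i,r}=\frac{(i-1)h_{i-1,r}+(r-1)h_{i,r-1}}{i+r+1+\alpha},\qquad r\ge i+2.$$ In particular, for all $i,j\ge1$, $$(nk)^{-2}\mathbf E X^{(n)}_iX^{(n)}_j=x^{(n)}_ix^{(n)}_j+h_{i,j}(nk)^{-1}+o(n^{-1}).$$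
   Context: Preferred attachment affiliation model. Fix a real $\lambda>0$, an integer $k\ge 1$ and an integer $l\ge 0$ with $\lambda\le k+l$. At time $0$ a library contains books $w_1,\dots,w_l$, each with score $1$. For $n=0,1,2,\dots$, step $n+1$ proceeds as follows: $k$ new books $w_{l+nk+1},\dots,w_{l+(n+1)k}$ arrive, each with score $1$; then a customer $v_{n+1}$ arrives and, conditionally on the past and independently over books, downloads each book $w\in W_{n+1}=\{w_1,\dots,w_{l+(n+1)k}\}$ with probability $p_{n+1,s(w)}=\lambda s(w)/(l+(n+1)k+n\lambda)$, where $s(w)$ is the current score of $w$. Every book downloaded by $v_{n+1}$ then has its score increased by $1$. $W_n=\{w_1,\dots,w_{l+nk}\}$ and $s_n(w)$ denotes the score of $w$ after step $n$. $X^{(n)}_i$ is the number of books $w\in W_n$ with $s_n(w)=i$. Define $x^{(n)}_i=(nk)^{-1}\mathbf E X^{(n)}_i$ and $h^{(n)}_{i,j}=(nk)^{-1}\big(\mathbf E X^{(n)}_iX^{(n)}_j-\mathbf E X^{(n)}_i\,\mathbf E X^{(n)}_j\big)$. *)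

(* Defs.v *)
From Stdlib Require Import Reals List Arith.
Open Scope R_scope.

(* A state = list of current scores of the books w_1, ..., w_{|W|} (in order). *)

(* Exact expectation of g(new state) when each book of score s is
   independently downloaded (score s -> s+1) with probability p s. *)
Fixpoint indep_exp (p : nat -> R) (st : list nat) (g : list nat -> R) : R :=
  match st with
  | nil => g nil
  | s :: st' =>
      p s * indep_exp p st' (fun t => g (S s :: t))
      + (1 - p s) * indep_exp p st' (fun t => g (s :: t))
  end.

(* Step n+1 from the state after step n: k new books of score 1 arrive,
   then customer v_{n+1} downloads each book w independently with
   probability lam * s(w) / (l + (n+1) k + n lam). *)
Definition step_exp (lam : R) (k l n : nat) (st : list nat) (f : list nat -> R) : R :=
  indep_exp (fun s => lam * INR s / (INR (l + (n + 1) * k) + INR n * lam))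
            (st ++ repeat 1%nat k) f.

(* Ex lam k l n f = E f(state after step n); at time 0 the state is l books of score 1. *)
Fixpoint Ex (lam : R) (k l n : nat) (f : list nat -> R) : R :=
  match n with
  | O => f (repeat 1%nat l)
  | S m => Ex lam k l m (fun st => step_exp lam k l m st f)
  end.

Definition Xcount (i : nat) (st : list nat) : R :=
  INR (count_occ Nat.eq_dec st i).

Definition xn (lam : R) (k l i n : nat) : R :=
  / (INR n * INR k) * Ex lam k l n (Xcount i).

Definition mom2 (lam : R) (k l i j n : nat) : R :=
  / (INR n * INR k) ^ 2 * Ex lam k l n (fun st => Xcount i st * Xcount j st).

Definition hn (lam : R) (k l i j n : nat) : R :=
  / (INR n * INR k) *
  (Ex lam k l n (fun st => Xcount i st * Xcount j st)
   - Ex lam k l n (Xcount i) * Ex lam k l n (Xcount j)).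

(* rising product: rprod a i = a (a+1) ... (a+i-1) = Gamma(a+i)/Gamma(a) *)
Fixpoint rprod (a : R) (i : nat) : R :=
  match i with
  | O => 1
  | S m => rprod a m * (a + INR m)
  end.

(* x_i = (1+alpha) Gamma(2+alpha) Gamma(i) / Gamma(2+alpha+i) for i >= 1, x_0 = 0,
   written via Gamma(i) = (i-1)! and Gamma(2+alpha+i)/Gamma(2+alpha) = rprod (2+alpha) i. *)
Definition xlim (alpha : R) (i : nat) : R :=
  match i with
  | O => 0
  | S m => (1 + alpha) * INR (fact m) / rprod (2 + alpha) i
  end.

(* Main.v *)
Require Import Defs.
From Stdlib Require Import Reals List Arith Lra Lia ZArith ClassicalEpsilon.
Open Scope R_scope.

Definition dl (a b : nat) : R := if Nat.eq_dec a b then 1 else 0.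

Lemma dl_S a b : dl (S a) (S b) = dl a b.
Proof. unfold dl; destruct (Nat.eq_dec (S a) (S b)), (Nat.eq_dec a b); try lia; reflexivity. Qed.

Lemma dl_mul (f : nat -> R) a b : f a * dl a b = f b * dl a b.
Proof. unfold dl; destruct (Nat.eq_dec a b); [subst; reflexivity | ring]. Qed.

Lemma Xcount_nil i : Xcount i nil = 0.
Proof. reflexivity. Qed.

Lemma Xcount_cons i s t : Xcount i (s :: t) = dl s i + Xcount i t.
Proof. unfold Xcount, dl; simpl; destruct (Nat.eq_dec s i); [rewrite S_INR; lra | lra]. Qed.

Lemma Xcount_app i a b : Xcount i (a ++ b) = Xcount i a + Xcount i b.
Proof. induction a as [|s a IH]; simpl. rewrite Xcount_nil; ring.
 rewrite !Xcount_cons, IH; ring. Qed.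

Lemma Xcount_rep i k : Xcount i (repeat 1%nat k) = INR k * dl 1 i.
Proof. induction k as [|k IH]. simpl. rewrite Xcount_nil; ring.
 change (repeat 1%nat (S k)) with (1%nat :: repeat 1%nat k).
 rewrite Xcount_cons, IH, S_INR; ring. Qed.

Lemma ie_ext p st f g : (forall t, f t = g t) -> indep_exp p st f = indep_exp p st g.
Proof. revert f g; induction st as [|s st IH]; intros f g H; simpl. apply H.
 rewrite (IH (fun t => f (S s :: t)) (fun t => g (S s :: t))) by (intro; apply H).
 rewrite (IH (fun t => f (s :: t)) (fun t => g (s :: t))) by (intro; apply H). reflexivity. Qed.

Lemma ie_add p st f g : indep_exp p st (fun t => f t + g t) = indep_exp p st f + indep_exp p st g.
Proof. revert f g; induction st as [|s st IH]; intros f g; simpl. reflexivity.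
 rewrite (IH (fun t => f (S s :: t))), (IH (fun t => f (s :: t))); ring. Qed.

Lemma ie_scal p st c f : indep_exp p st (fun t => c * f t) = c * indep_exp p st f.
Proof. revert f; induction st as [|s st IH]; intros f; simpl. reflexivity.
 rewrite (IH (fun t => f (S s :: t))), (IH (fun t => f (s :: t))); ring. Qed.

Lemma ie_const p st c : indep_exp p st (fun _ => c) = c.
Proof. induction st as [|s st IH]; simpl. reflexivity. rewrite IH; ring. Qed.

Lemma ie_addc p st c f : indep_exp p st (fun t => c + f t) = c + indep_exp p st f.
Proof. rewrite ie_add, ie_const; reflexivity. Qed.

Fixpoint E1 (p : nat -> R) (st : list nat) (i : nat) : R :=
  match st with nil => 0 | s :: t => (1 - p s) * dl s i + p s * dl (S s) i + E1 p t i end.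

Fixpoint V2 (p : nat -> R) (st : list nat) (i j : nat) : R :=
  match st with nil => 0
  | s :: t => p s * (1 - p s) * (dl (S s) i - dl s i) * (dl (S s) j - dl s j) + V2 p t i j end.

Lemma ie_X p st i : indep_exp p st (Xcount i) = E1 p st i.
Proof. induction st as [|s st IH]; simpl. reflexivity.
 rewrite (ie_ext _ _ (fun t => Xcount i (S s :: t)) (fun t => dl (S s) i + Xcount i t)) by (intro; apply Xcount_cons).
 rewrite (ie_ext _ _ (fun t => Xcount i (s :: t)) (fun t => dl s i + Xcount i t)) by (intro; apply Xcount_cons).
 rewrite !ie_addc, IH; ring. Qed.

Lemma ie_XX p st i j : indep_exp p st (fun t => Xcount i t * Xcount j t) = E1 p st i * E1 p st j + V2 p st i j.
Proof. induction st as [|s st IH]; simpl. unfold Xcount; simpl; ring.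
 rewrite (ie_ext _ _ (fun t => Xcount i (S s :: t) * Xcount j (S s :: t)) (fun t => dl (S s) i * dl (S s) j + (dl (S s) i * Xcount j t + (dl (S s) j * Xcount i t + Xcount i t * Xcount j t)))) by (intro; rewrite !Xcount_cons; ring).
 rewrite (ie_ext _ _ (fun t => Xcount i (s :: t) * Xcount j (s :: t)) (fun t => dl s i * dl s j + (dl s i * Xcount j t + (dl s j * Xcount i t + Xcount i t * Xcount j t)))) by (intro; rewrite !Xcount_cons; ring).
 rewrite !ie_addc, !ie_add, !ie_scal, IH, !ie_X; ring. Qed.

Lemma E1_S p st m : E1 p st (S m) = (1 - p (S m)) * Xcount (S m) st + p m * Xcount m st.
Proof. induction st as [|s st IH]; simpl. unfold Xcount; simpl; ring.
 rewrite IH, !Xcount_cons, dl_S.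
 rewrite (dl_mul (fun s => 1 - p s) s (S m)), (dl_mul p s m). ring. Qed.

Lemma E1_0 p st : p 0%nat = 0 -> E1 p st 0 = Xcount 0 st.
Proof. intro H; induction st as [|s st IH]; simpl. reflexivity.
 rewrite IH, Xcount_cons. assert (dl (S s) 0 = 0) as -> by reflexivity.
 rewrite (dl_mul (fun s => 1 - p s) s 0); simpl. rewrite H; ring. Qed.

Definition W2 (p : nat -> R) (st : list nat) (m : nat) := p m * (1 - p m) * Xcount m st.

Lemma V2_S p st i j : V2 p st (S i) (S j) =
  W2 p st i * (dl i j - dl i (S j)) + W2 p st (S i) * (dl (S i) (S j) - dl (S i) j).
Proof. unfold W2; induction st as [|s st IH]; simpl. unfold Xcount; simpl; ring.
 rewrite IH, !Xcount_cons, !dl_S.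
 unfold dl; repeat destruct Nat.eq_dec; subst; try lia; ring. Qed.
Definition qq (lam : R) (k l n s : nat) : R := lam * INR s / (INR (l + (n + 1) * k) + INR n * lam).

Lemma Ex_S lam k l n f : Ex lam k l (S n) f = Ex lam k l n (fun st => step_exp lam k l n st f).
Proof. reflexivity. Qed.

Lemma step_eq lam k l n st f : step_exp lam k l n st f = indep_exp (qq lam k l n) (st ++ repeat 1%nat k) f.
Proof. reflexivity. Qed.

Lemma Ex_ext lam k l n f g : (forall st, f st = g st) -> Ex lam k l n f = Ex lam k l n g.
Proof. revert f g; induction n as [|n IH]; intros f g H. apply H.
 rewrite !Ex_S. apply IH. intro st. rewrite !step_eq. apply ie_ext. intro; apply H. Qed.

Lemma Ex_add lam k l n f g : Ex lam k l n (fun st => f st + g st) = Ex lam k l n f + Ex lam k l n g.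
Proof. revert f g; induction n as [|n IH]; intros f g. reflexivity.
 rewrite !Ex_S, <- IH. apply Ex_ext. intro st. rewrite !step_eq. apply ie_add. Qed.

Lemma Ex_scal lam k l n c f : Ex lam k l n (fun st => c * f st) = c * Ex lam k l n f.
Proof. revert f; induction n as [|n IH]; intros f. reflexivity.
 rewrite !Ex_S, <- IH. apply Ex_ext. intro st. rewrite !step_eq. apply ie_scal. Qed.

Lemma Ex_const lam k l n c : Ex lam k l n (fun _ => c) = c.
Proof. induction n as [|n IH]. reflexivity.
 rewrite Ex_S. transitivity (Ex lam k l n (fun _ => c)); [|apply IH]. apply Ex_ext. intro st. rewrite !step_eq. apply ie_const. Qed.

Definition Mm lam k l n i := Ex lam k l n (Xcount i).
Definition S2 lam k l n i j := Ex lam k l n (fun st => Xcount i st * Xcount j st).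
Definition Cv lam k l n i j := S2 lam k l n i j - Mm lam k l n i * Mm lam k l n j.

Lemma qq0 lam k l n : qq lam k l n 0 = 0.
Proof. unfold qq; simpl; unfold Rdiv; ring. Qed.

Lemma Lf_eq lam k l n st m :
  E1 (qq lam k l n) (st ++ repeat 1%nat k) (S m) =
  (1 - qq lam k l n (S m)) * Xcount (S m) st + (qq lam k l n m * Xcount m st +
   ((1 - qq lam k l n (S m)) * INR k * dl 1 (S m) + qq lam k l n m * INR k * dl 1 m)).
Proof. rewrite E1_S, !Xcount_app, !Xcount_rep; ring. Qed.

Lemma M_rec lam k l n m : Mm lam k l (S n) (S m) =
  (1 - qq lam k l n (S m)) * Mm lam k l n (S m) + (qq lam k l n m * Mm lam k l n m +
   ((1 - qq lam k l n (S m)) * INR k * dl 1 (S m) + qq lam k l n m * INR k * dl 1 m)).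
Proof. unfold Mm. rewrite Ex_S.
 rewrite (Ex_ext _ _ _ _ _ (fun st => (1 - qq lam k l n (S m)) * Xcount (S m) st + (qq lam k l n m * Xcount m st +
   ((1 - qq lam k l n (S m)) * INR k * dl 1 (S m) + qq lam k l n m * INR k * dl 1 m)))).
 2:{ intro st. rewrite step_eq, ie_X. apply Lf_eq. }
 rewrite !Ex_add, !Ex_scal, !Ex_const. reflexivity. Qed.

Lemma M0 lam k l n : Mm lam k l n 0 = 0.
Proof. induction n as [|n IH]. unfold Mm; simpl. rewrite Xcount_rep. unfold dl; simpl; ring.
 unfold Mm in *. rewrite Ex_S. rewrite <- IH. apply Ex_ext. intro st.
 rewrite step_eq, ie_X, E1_0 by apply qq0. rewrite Xcount_app, Xcount_rep. unfold dl; simpl; ring. Qed.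

Lemma Ex_aff lam k l n a b c u v a' b' c' u' v' :
  Ex lam k l n (fun st => (a * Xcount u st + (b * Xcount v st + c)) * (a' * Xcount u' st + (b' * Xcount v' st + c')))
  - Ex lam k l n (fun st => a * Xcount u st + (b * Xcount v st + c))
    * Ex lam k l n (fun st => a' * Xcount u' st + (b' * Xcount v' st + c'))
  = a * a' * Cv lam k l n u u' + a * b' * Cv lam k l n u v' + b * a' * Cv lam k l n v u' + b * b' * Cv lam k l n v v'.
Proof.
 rewrite (Ex_ext _ _ _ _ _ (fun st => (a*a') * (Xcount u st * Xcount u' st) + ((a*b') * (Xcount u st * Xcount v' st)
   + ((b*a') * (Xcount v st * Xcount u' st) + ((b*b') * (Xcount v st * Xcount v' st)
   + ((a*c') * Xcount u st + ((b*c') * Xcount v st + ((c*a') * Xcount u' st + ((c*b') * Xcount v' st + c*c'))))))))) by (intro; ring).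
 rewrite !Ex_add, !Ex_scal, !Ex_const. unfold Cv, S2, Mm. ring. Qed.

Lemma C_rec lam k l n i j :
  let q := qq lam k l n in
  Cv lam k l (S n) (S i) (S j) =
    (1 - q (S i)) * (1 - q (S j)) * Cv lam k l n (S i) (S j)
  + (1 - q (S i)) * q j * Cv lam k l n (S i) j
  + q i * (1 - q (S j)) * Cv lam k l n i (S j)
  + q i * q j * Cv lam k l n i j
  + (q i * (1 - q i) * (Mm lam k l n i + INR k * dl 1 i) * (dl i j - dl i (S j))
     + q (S i) * (1 - q (S i)) * (Mm lam k l n (S i) + INR k * dl 1 (S i)) * (dl (S i) (S j) - dl (S i) j)).
Proof. intro q.
 assert (HS : S2 lam k l (S n) (S i) (S j) =
   Ex lam k l n (fun st => ((1 - q (S i)) * Xcount (S i) st + (q i * Xcount i st +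
   ((1 - q (S i)) * INR k * dl 1 (S i) + q i * INR k * dl 1 i))) *
   ((1 - q (S j)) * Xcount (S j) st + (q j * Xcount j st +
   ((1 - q (S j)) * INR k * dl 1 (S j) + q j * INR k * dl 1 j))))
   + Ex lam k l n (fun st => (q i * (1 - q i) * (dl i j - dl i (S j))) * Xcount i st +
     ((q (S i) * (1 - q (S i)) * (dl (S i) (S j) - dl (S i) j)) * Xcount (S i) st +
     (q i * (1 - q i) * (INR k * dl 1 i) * (dl i j - dl i (S j))
     + q (S i) * (1 - q (S i)) * (INR k * dl 1 (S i)) * (dl (S i) (S j) - dl (S i) j))))).
 { unfold S2. rewrite Ex_S, <- Ex_add. apply Ex_ext. intro st.
   rewrite step_eq, ie_XX, !Lf_eq, V2_S. unfold W2. rewrite !Xcount_app, !Xcount_rep. fold q. ring. }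
 assert (HM : forall m, Mm lam k l (S n) (S m) = Ex lam k l n (fun st => (1 - q (S m)) * Xcount (S m) st + (q m * Xcount m st +
   ((1 - q (S m)) * INR k * dl 1 (S m) + q m * INR k * dl 1 m)))).
 { intro m. unfold Mm. rewrite Ex_S. apply Ex_ext. intro st. rewrite step_eq, ie_X. apply Lf_eq. }
 pose proof (Ex_aff lam k l n (1 - q (S i)) (q i) ((1 - q (S i)) * INR k * dl 1 (S i) + q i * INR k * dl 1 i) (S i) i
   (1 - q (S j)) (q j) ((1 - q (S j)) * INR k * dl 1 (S j) + q j * INR k * dl 1 j) (S j) j) as Haff.
 unfold Cv at 1. rewrite HS, !HM.
 rewrite (Ex_add lam k l n (fun st => (q i * (1 - q i) * (dl i j - dl i (S j))) * Xcount i st)).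
 rewrite (Ex_add lam k l n (fun st => (q (S i) * (1 - q (S i)) * (dl (S i) (S j) - dl (S i) j)) * Xcount (S i) st)).
 rewrite !Ex_scal, Ex_const. fold (Mm lam k l n i) (Mm lam k l n (S i)).
 lra.
Qed.

Lemma arch (x : R) : exists N : nat, forall n, (N <= n)%nat -> x < INR n.
Proof.
 destruct (archimed (Rabs x)) as [H1 _].
 exists (Z.to_nat (up (Rabs x))). intros n Hn.
 apply le_INR in Hn. rewrite INR_IZR_INZ, Z2Nat.id in Hn.
 - pose proof (Rle_abs x). lra.
 - apply le_IZR. pose proof (Rabs_pos x). lra.
Qed.

Lemma ev_max (P Q : nat -> Prop) : (exists N, forall n, (N <= n)%nat -> P n) -> (exists N, forall n, (N <= n)%nat -> Q n) ->
  exists N, forall n, (N <= n)%nat -> P n /\ Q n.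
Proof. intros [N1 H1] [N2 H2]. exists (max N1 N2). intros n Hn; split; [apply H1|apply H2]; lia. Qed.

Definition Bd (u : nat -> R) := exists K N, forall n, (N <= n)%nat -> Rabs (u n) <= K.
Definition Oi (u : nat -> R) := Bd (fun n => INR n * u n).

Lemma Bd_ext u v : (forall n, u n = v n) -> Bd u -> Bd v.
Proof. intros E [K [N H]]; exists K, N; intros n Hn; rewrite <- E; auto. Qed.
Lemma Oi_ext u v : (forall n, u n = v n) -> Oi u -> Oi v.
Proof. intros E; apply Bd_ext; intro n; rewrite E; reflexivity. Qed.

Lemma Bd_add u v : Bd u -> Bd v -> Bd (fun n => u n + v n).
Proof. intros [K1 [N1 H1]] [K2 [N2 H2]]; exists (K1 + K2), (max N1 N2); intros n Hn.
 pose proof (H1 n ltac:(lia)); pose proof (H2 n ltac:(lia)).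
 pose proof (Rabs_triang (u n) (v n)); lra. Qed.

Lemma Bd_mul u v : Bd u -> Bd v -> Bd (fun n => u n * v n).
Proof. intros [K1 [N1 H1]] [K2 [N2 H2]]; exists (K1 * K2), (max N1 N2); intros n Hn.
 pose proof (H1 n ltac:(lia)); pose proof (H2 n ltac:(lia)). rewrite Rabs_mult.
 apply Rmult_le_compat; auto using Rabs_pos. Qed.

Lemma Bd_const c : Bd (fun _ => c).
Proof. exists (Rabs c), 0%nat; intros; lra. Qed.

Lemma Oi_add u v : Oi u -> Oi v -> Oi (fun n => u n + v n).
Proof. intros H1 H2; eapply Bd_ext; [|apply (Bd_add _ _ H1 H2)]; intro; simpl; ring. Qed.

Lemma Oi_mulBd b u : Bd b -> Oi u -> Oi (fun n => b n * u n).
Proof. intros H1 H2; eapply Bd_ext; [|apply (Bd_mul _ _ H1 H2)]; intro; simpl; ring. Qed.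

Lemma Oi_scal c u : Oi u -> Oi (fun n => c * u n).
Proof. intros; apply Oi_mulBd; auto using Bd_const. Qed.

Lemma Oi_zero : Oi (fun _ => 0).
Proof. exists 0, 0%nat; intros; rewrite Rmult_0_r, Rabs_R0; lra. Qed.

Lemma Oi_cv u : Oi u -> Un_cv u 0.
Proof. intros [K [N H]] eps He.
 destruct (arch (Rabs K / eps)) as [N2 H2].
 exists (max (max N N2) 1). intros n Hn. unfold R_dist. rewrite Rminus_0_r.
 pose proof (H n ltac:(lia)) as Hb. pose proof (H2 n ltac:(lia)) as Hn2.
 assert (0 < INR n) by (apply lt_0_INR; lia).
 rewrite Rabs_mult, Rabs_right in Hb by lra.
 assert (Rabs K / eps * eps = Rabs K) by (field; lra).
 assert (INR n * Rabs (u n) < INR n * eps).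
 { pose proof (Rle_abs K). nra. }
 nra. Qed.

Lemma Oi_Bd u : Oi u -> Bd u.
Proof. intros [K [N H]]; exists (Rabs K), (max N 1); intros n Hn.
 pose proof (H n ltac:(lia)) as Hb.
 assert (1 <= INR n) by (apply (le_INR 1); lia).
 rewrite Rabs_mult, Rabs_right in Hb by lra. pose proof (Rle_abs K).
 pose proof (Rabs_pos (u n)). nra. Qed.

Lemma cv_ext_ev u v L : (exists N, forall n, (N <= n)%nat -> u n = v n) -> Un_cv u L -> Un_cv v L.
Proof. intros [N HN] H eps He. destruct (H eps He) as [N1 H1]. exists (max N N1); intros n Hn.
 rewrite <- HN by lia. apply H1; lia. Qed.

Lemma cv_const c : Un_cv (fun _ => c) c.
Proof. intros eps He; exists 0%nat; intros; unfold R_dist; rewrite Rminus_diag, Rabs_R0; lra. Qed.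

Lemma cv_bd u L : Un_cv u L -> Bd u.
Proof. intros H. destruct (H 1 Rlt_0_1) as [N HN]. exists (Rabs L + 1), N; intros n Hn.
 specialize (HN n Hn). unfold R_dist in HN. pose proof (Rabs_triang_inv (u n) L). lra. Qed.

Lemma cv_scal c u L : Un_cv u L -> Un_cv (fun n => c * u n) (c * L).
Proof. intro H; apply CV_mult; auto using cv_const. Qed.

Lemma ces (e eps : nat -> R) (N0 : nat) :
  (forall n, (N0 <= n)%nat -> Rabs (e (S n)) <= Rabs (e n) + Rabs (eps n)) ->
  Un_cv eps 0 -> Un_cv (fun n => e n / INR n) 0.
Proof.
 intros Hrec Hcv ep Hep.
 destruct (Hcv (ep / 2) ltac:(lra)) as [N1 H1].
 set (M := max N0 N1).
 assert (Hgr : forall m, Rabs (e (M + m)%nat) <= Rabs (e M) + INR m * (ep / 2)).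
 { induction m as [|m IH]. rewrite Nat.add_0_r; simpl; lra.
   rewrite Nat.add_succ_r. pose proof (Hrec (M + m)%nat ltac:(unfold M; lia)).
   pose proof (H1 (M + m)%nat ltac:(unfold M; lia)) as Hq. unfold R_dist in Hq. rewrite Rminus_0_r in Hq.
   rewrite S_INR; lra. }
 destruct (arch (2 * Rabs (e M) / ep)) as [N2 H2].
 exists (max (max M N2) 1). intros n Hn. unfold R_dist; rewrite Rminus_0_r.
 assert (Hn0 : 0 < INR n) by (apply lt_0_INR; lia).
 replace n with (M + (n - M))%nat in * by lia.
 specialize (Hgr (n - M)%nat). set (m := (n - M)%nat) in *.
 pose proof (H2 (M + m)%nat ltac:(lia)) as H3.
 unfold Rdiv; rewrite Rabs_mult, Rabs_inv, (Rabs_right (INR (M + m))) by lra.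
 rewrite plus_INR in *.
 assert (2 * Rabs (e M) / ep * ep = 2 * Rabs (e M)) by (field; lra).
 assert (HmM : INR m <= INR M + INR m) by (pose proof (pos_INR M); lra).
 apply (Rmult_lt_reg_r (INR M + INR m)); [lra|].
 rewrite Rmult_assoc, Rinv_l by lra.
 assert (INR m * (ep / 2) <= (INR M + INR m) * (ep / 2)) by nra.
 assert (2 * Rabs (e M) < (INR M + INR m) * ep) by nra.
 nra.
Qed.

Lemma lim_lemma (c rho r : nat -> R) (a R0 : R) :
  0 < 1 + a ->
  (exists N, forall n, (N <= n)%nat -> c (S n) = rho n * c n + r n /\ Rabs (rho n) <= 1) ->
  Un_cv (fun n => INR n * (rho n - 1)) (- a) -> Un_cv r R0 ->
  Un_cv (fun n => c n / INR n) (R0 / (1 + a)).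
Proof.
 intros Ha [N HN] Hrho Hr. set (L := R0 / (1 + a)).
 set (e := fun n => c n - L * INR n).
 set (eps := fun n => L * (INR n * (rho n - 1) - 1) + r n).
 assert (He : forall n, (N <= n)%nat -> Rabs (e (S n)) <= Rabs (e n) + Rabs (eps n)).
 { intros n Hn. destruct (HN n Hn) as [Hc Hb].
   assert (e (S n) = rho n * e n + eps n) as ->.
   { unfold e, eps; rewrite Hc, S_INR; ring. }
   pose proof (Rabs_triang (rho n * e n) (eps n)). rewrite Rabs_mult in H.
   pose proof (Rabs_pos (e n)). nra. }
 assert (Heps : Un_cv eps 0).
 { replace 0 with (L * (- a - 1) + R0) by (unfold L; field; lra).
   apply CV_plus; auto. apply cv_scal. apply CV_minus; auto using cv_const. }
 pose proof (ces e eps N He Heps) as Hc.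
 apply cv_ext_ev with (fun n => e n / INR n + L).
 { exists 1%nat; intros n Hn. assert (0 < INR n) by (apply lt_0_INR; lia). unfold e; field; lra. }
 pose proof (CV_plus _ _ _ _ Hc (cv_const L)) as H. rewrite Rplus_0_l in H. exact H.
Qed.

Lemma rate_lemma (c g r : nat -> R) (a R0 : R) :
  0 < a ->
  (exists N, forall n, (N <= n)%nat -> c (S n) = (1 - g n) * c n + r n /\ 0 <= g n <= 1) ->
  Oi (fun n => INR n * g n - a) -> Oi (fun n => r n - R0) ->
  Bd (fun n => c n - R0 / (1 + a) * INR n).
Proof.
 intros Ha HN Hg Hr. set (L := R0 / (1 + a)).
 set (e := fun n => c n - L * INR n).
 assert (Hd : Oi (fun n => L * (a - INR n * g n) + (r n - R0))).
 { apply Oi_add; auto. eapply Oi_ext; [|apply (Oi_scal (- L) _ Hg)]. intro; simpl; ring. }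
 destruct Hd as [K [N1 HK]].
 assert (Hgl : exists N2, forall n, (N2 <= n)%nat -> a / 2 <= INR n * g n).
 { pose proof (Oi_cv _ Hg) as Hc. destruct (Hc (a / 2) ltac:(lra)) as [N2 H2]. exists N2; intros n Hn.
   specialize (H2 n Hn); unfold R_dist in H2; rewrite Rminus_0_r in H2.
   pose proof (Rle_abs (- (INR n * g n - a))). rewrite Rabs_Ropp in H. lra. }
 destruct Hgl as [N2 HN2]. destruct HN as [N3 HN3].
 set (M := max (max N1 N2) (max N3 1)).
 set (B := Rmax (Rabs (e M)) (2 * Rabs K / a)).
 assert (Hall : forall m, Rabs (e (M + m)%nat) <= B).
 { induction m as [|m IH]. rewrite Nat.add_0_r; unfold B; apply Rmax_l.
   set (n := (M + m)%nat) in *. rewrite Nat.add_succ_r. fold n.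
   destruct (HN3 n ltac:(unfold n, M; lia)) as [Hc Hgb].
   pose proof (HK n ltac:(unfold n, M; lia)) as Hk.
   pose proof (HN2 n ltac:(unfold n, M; lia)) as Hg2.
   assert (Hn : 1 <= INR n) by (apply (le_INR 1); unfold n, M; lia).
   assert (e (S n) = (1 - g n) * e n + (L * (a - INR n * g n) + (r n - R0))) as ->.
   { unfold e, L; rewrite Hc, S_INR. field. lra. }
   set (d := L * (a - INR n * g n) + (r n - R0)) in *.
   rewrite Rabs_mult in Hk. rewrite (Rabs_right (INR n)) in Hk by lra.
   assert (Rabs d <= Rabs K / INR n).
   { apply (Rmult_le_reg_l (INR n)); [lra|]. replace (INR n * (Rabs K / INR n)) with (Rabs K) by (field; lra).
     pose proof (Rle_abs K); lra. }
   pose proof (Rabs_triang ((1 - g n) * e n) d). rewrite Rabs_mult, (Rabs_right (1 - g n)) in H0 by lra.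
   assert (HB2 : 2 * Rabs K / a <= B) by apply Rmax_r.
   assert (Rabs K / INR n <= g n * B).
   { apply (Rmult_le_reg_l (INR n)); [lra|]. replace (INR n * (Rabs K / INR n)) with (Rabs K) by (field; lra).
     assert (2 * Rabs K / a * a = 2 * Rabs K) by (field; lra).
     assert (0 <= Rabs K) by apply Rabs_pos.
     assert (Rabs K <= a / 2 * B) by nra.
     assert (0 <= B) by (pose proof (Rabs_pos (e M)); unfold B; pose proof (Rmax_l (Rabs (e M)) (2 * Rabs K / a)); lra).
     nra. }
   nra. }
 exists B, M. intros n Hn. replace n with (M + (n - M))%nat by lia. apply Hall.
Qed.

Definition kap (lam : R) (k : nat) := lam / (INR k + lam).

Lemma div_le (a b c : R) : 0 < b -> a <= c * b -> a / b <= c.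
Proof. intros Hb H; apply (Rmult_le_reg_r b); auto. replace (a / b * b) with a by (field; lra); lra. Qed.

Lemma D_eq lam k l n : INR (l + (n + 1) * k) + INR n * lam = INR l + INR k + INR n * (INR k + lam).
Proof. rewrite plus_INR, mult_INR, plus_INR; simpl; ring. Qed.

Lemma INRk_pos k : (1 <= k)%nat -> 1 <= INR k.
Proof. intro; apply (le_INR 1); lia. Qed.

Lemma qq_nonneg lam k l n s : 0 < lam -> (1 <= k)%nat -> 0 <= qq lam k l n s.
Proof. intros Hl Hk; unfold qq; rewrite D_eq. pose proof (INRk_pos k Hk). pose proof (pos_INR l).
 pose proof (pos_INR n). pose proof (pos_INR s). apply Rmult_le_pos.
 nra. left; apply Rinv_0_lt_compat; nra. Qed.

Lemma q_F1 lam k l s : 0 < lam -> (1 <= k)%nat -> Oi (fun n => INR n * qq lam k l n s - INR s * kap lam k).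
Proof. intros Hl Hk. pose proof (INRk_pos k Hk). pose proof (pos_INR l). pose proof (pos_INR s).
 exists (lam * INR s * (INR l + INR k) / (INR k + lam) / (INR k + lam)), 0%nat. intros n _.
 pose proof (pos_INR n). unfold qq, kap. rewrite D_eq.
 set (D := INR l + INR k + INR n * (INR k + lam)).
 assert (HD : 0 < D) by (unfold D; nra).
 assert (E : INR n * (INR n * (lam * INR s / D) - INR s * (lam / (INR k + lam)))
   = - (lam * INR s * (INR l + INR k) / (INR k + lam)) * (INR n / D)).
 { pose proof HD as HD2; unfold D in *; field; repeat split; lra. }
 assert (Hkl : 0 < INR k + lam) by lra.
 set (K1 := lam * INR s * (INR l + INR k) / (INR k + lam)).
 assert (HK1 : 0 <= K1) by (unfold K1, Rdiv; apply Rmult_le_pos; [repeat apply Rmult_le_pos; lra|left; apply Rinv_0_lt_compat; lra]).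
 assert (Hnd : 0 <= INR n / D <= / (INR k + lam)).
 { split. unfold Rdiv; apply Rmult_le_pos; [lra|left; apply Rinv_0_lt_compat; lra].
   apply div_le; auto. apply (Rmult_le_reg_l (INR k + lam)); [lra|].
   rewrite <- Rmult_assoc, Rinv_r by lra. unfold D; nra. }
 rewrite E, Rabs_mult, Rabs_Ropp; fold K1. rewrite (Rabs_right K1) by lra. rewrite (Rabs_right (INR n / D)) by lra.
 unfold Rdiv at 2. unfold K1. apply Rmult_le_compat_l; fold K1; lra.
Qed.

Lemma kap_pos lam k : 0 < lam -> (1 <= k)%nat -> 0 < kap lam k.
Proof. intros; unfold kap. pose proof (INRk_pos k H0). apply Rdiv_lt_0_compat; lra. Qed.

Lemma nq_cv lam k l s : 0 < lam -> (1 <= k)%nat -> Un_cv (fun n => INR n * qq lam k l n s) (INR s * kap lam k).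
Proof. intros Hl Hk. pose proof (CV_plus _ _ _ _ (Oi_cv _ (q_F1 lam k l s Hl Hk)) (cv_const (INR s * kap lam k))) as H.
 rewrite Rplus_0_l in H. eapply cv_ext_ev; [|exact H]. exists 0%nat; intros; simpl; ring. Qed.

Lemma q_Oi lam k l s : 0 < lam -> (1 <= k)%nat -> Oi (fun n => qq lam k l n s).
Proof. intros Hl Hk. unfold Oi. eapply Bd_ext; [|apply (Bd_add _ _ (Oi_Bd _ (q_F1 lam k l s Hl Hk)) (Bd_const (INR s * kap lam k)))].
 intro; simpl; ring. Qed.

Lemma q_cv0 lam k l s : 0 < lam -> (1 <= k)%nat -> Un_cv (fun n => qq lam k l n s) 0.
Proof. intros; apply Oi_cv, q_Oi; auto. Qed.

Lemma q_ev lam k l s : 0 < lam -> (1 <= k)%nat -> exists N, forall n, (N <= n)%nat -> 0 <= qq lam k l n s <= 1.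
Proof. intros Hl Hk. destruct (q_cv0 lam k l s Hl Hk 1 Rlt_0_1) as [N HN]. exists N; intros n Hn.
 specialize (HN n Hn). unfold R_dist in HN. rewrite Rminus_0_r in HN. pose proof (Rle_abs (qq lam k l n s)).
 pose proof (qq_nonneg lam k l n s Hl Hk). lra. Qed.

Lemma rprod_pos a n : 0 < a -> 0 < rprod a n.
Proof. intro Ha; induction n as [|n IH]; simpl. lra. pose proof (pos_INR n). apply Rmult_lt_0_compat; lra. Qed.

Lemma xlim_rec lam k m : 0 < lam -> (1 <= k)%nat ->
  let al := INR k / lam in
  INR k * dl 1 (S m) + INR m * kap lam k * (INR k * xlim al m)
  = (1 + INR (S m) * kap lam k) * (INR k * xlim al (S m)).
Proof. intros Hl Hk al. pose proof (INRk_pos k Hk).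
 assert (Hal : 0 < al) by (unfold al; apply Rdiv_lt_0_compat; lra).
 assert (Hkap : kap lam k = 1 / (1 + al)) by (unfold kap, al; field; lra).
 rewrite Hkap. destruct m as [|p].
 - unfold dl; simpl. field. lra.
 - assert (dl 1 (S (S p)) = 0) as -> by (unfold dl; destruct Nat.eq_dec; [lia|reflexivity]).
   unfold xlim. change (rprod (2 + al) (S (S p))) with (rprod (2 + al) (S p) * (2 + al + INR (S p))).
   change (fact (S p)) with ((S p) * fact p)%nat. rewrite mult_INR.
   pose proof (rprod_pos (2 + al) (S p) ltac:(lra)). pose proof (pos_INR p).
   rewrite !S_INR. field. repeat split; lra.
Qed.

Lemma M_bd lam k l m : 0 < lam -> (1 <= k)%nat ->
  Bd (fun n => Mm lam k l n m - INR k * xlim (INR k / lam) m * INR n).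
Proof. intros Hl Hk. set (al := INR k / lam). induction m as [|m IH].
 - eapply Bd_ext; [|apply (Bd_const 0)]. intro n; simpl; rewrite M0; ring.
 - pose proof (xlim_rec lam k m Hl Hk) as Hx. cbv zeta in Hx. fold al in Hx.
   set (R0 := INR k * dl 1 (S m) + INR m * kap lam k * (INR k * xlim al m)).
   set (a := INR (S m) * kap lam k).
   assert (Ha : 0 < a) by (unfold a; apply Rmult_lt_0_compat; [apply lt_0_INR; lia | apply kap_pos; auto]).
   assert (HR : R0 / (1 + a) = INR k * xlim al (S m)).
   { unfold R0, a; rewrite Hx. field. unfold a in Ha; lra. }
   rewrite <- HR.
   apply (rate_lemma (fun n => Mm lam k l n (S m)) (fun n => qq lam k l n (S m))
     (fun n => qq lam k l n m * Mm lam k l n m + ((1 - qq lam k l n (S m)) * INR k * dl 1 (S m) + qq lam k l n m * INR k * dl 1 m))); auto.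
   + destruct (q_ev lam k l (S m) Hl Hk) as [N HN]. exists N; intros n Hn; split; auto.
     rewrite M_rec; ring.
   + apply q_F1; auto.
   + set (E := fun n => Mm lam k l n m - INR k * xlim al m * INR n).
     apply Oi_ext with (fun n => (INR k * xlim al m) * (INR n * qq lam k l n m - INR m * kap lam k)
        + (E n * qq lam k l n m + ((- INR k * dl 1 (S m)) * qq lam k l n (S m) + (INR k * dl 1 m) * qq lam k l n m))).
     { intro n; unfold E, R0; ring. }
     apply Oi_add. apply Oi_scal, q_F1; auto.
     apply Oi_add. apply Oi_mulBd; [exact IH | apply q_Oi; auto].
     apply Oi_add; apply Oi_scal, q_Oi; auto.
Qed.

Lemma M_cv lam k l m : 0 < lam -> (1 <= k)%nat ->
  Un_cv (fun n => Mm lam k l n m / INR n) (INR k * xlim (INR k / lam) m).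
Proof. intros Hl Hk. pose proof (M_bd lam k l m Hl Hk) as [K [N HN]].
 assert (Oi (fun n => Mm lam k l n m / INR n - INR k * xlim (INR k / lam) m)).
 { exists K, (max N 1); intros n Hn. assert (0 < INR n) by (apply lt_0_INR; lia).
   replace (INR n * (Mm lam k l n m / INR n - INR k * xlim (INR k / lam) m))
     with (Mm lam k l n m - INR k * xlim (INR k / lam) m * INR n) by (field; lra).
   apply HN; lia. }
 pose proof (CV_plus _ _ _ _ (Oi_cv _ H) (cv_const (INR k * xlim (INR k / lam) m))) as H2.
 rewrite Rplus_0_l in H2. eapply cv_ext_ev; [|exact H2]. exists 0%nat; intros; simpl; ring. Qed.

Lemma qC lam k l m (u : nat -> R) L : 0 < lam -> (1 <= k)%nat ->
  (m = 0%nat \/ Un_cv (fun n => u n / INR n) L) ->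
  Un_cv (fun n => qq lam k l n m * u n) (INR m * kap lam k * L).
Proof. intros Hl Hk [-> | H].
 - replace (INR 0 * kap lam k * L) with 0 by (simpl; ring). eapply cv_ext_ev; [|apply (cv_const 0)]. exists 0%nat; intros; rewrite qq0; ring.
 - pose proof (CV_mult _ _ _ _ (nq_cv lam k l m Hl Hk) H) as H2.
   eapply cv_ext_ev; [|exact H2]. exists 1%nat; intros n Hn. assert (0 < INR n) by (apply lt_0_INR; lia).
   field; lra.
Qed.

Lemma cv_eq u v L L' : Un_cv u L -> (forall n, u n = v n) -> L = L' -> Un_cv v L'.
Proof. intros H E <-. eapply cv_ext_ev; [|exact H]. exists 0%nat; auto. Qed.

Definition hfun lam k l i j : R :=
  match i, j with
  | O, _ => 0 | _, O => 0
  | _, _ => epsilon (inhabits 0) (fun L => Un_cv (fun n => hn lam k l i j n) L)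
  end.

Lemma hfun_spec lam k l i j L : (1 <= i)%nat -> (1 <= j)%nat ->
  Un_cv (fun n => hn lam k l i j n) L -> hfun lam k l i j = L.
Proof. intros Hi Hj H. destruct i as [|i]; [lia|]. destruct j as [|j]; [lia|].
 unfold hfun. apply (UL_sequence (fun n => hn lam k l (S i) (S j) n)); auto.
 apply epsilon_spec. exists L; exact H. Qed.

Lemma hn_eq lam k l i j n : hn lam k l i j n = / (INR n * INR k) * Cv lam k l n i j.
Proof. reflexivity. Qed.

Lemma hn_cv lam k l i j L : (1 <= k)%nat ->
  Un_cv (fun n => Cv lam k l n i j / INR n) L -> Un_cv (fun n => hn lam k l i j n) (L / INR k).
Proof. intros Hk H. pose proof (INRk_pos k Hk). pose proof (cv_scal (/ INR k) _ _ H) as H2.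
 eapply cv_ext_ev; [|eapply cv_eq; [exact H2| intro; reflexivity | unfold Rdiv; ring]].
 exists 1%nat; intros n Hn. assert (0 < INR n) by (apply lt_0_INR; lia).
 rewrite hn_eq. field. lra. Qed.

Definition Pc lam k l (i j : nat) : Prop :=
  let q := qq lam k l in let h := hfun lam k l in let x := xlim (INR k / lam) in
  let kp := kap lam k in
  Un_cv (fun n => Cv lam k l n (S i) (S j) / INR n) (INR k * h (S i) (S j)) /\
  h (S i) (S j) * (1 + (INR (S i) + INR (S j)) * kp) =
    INR j * kp * h (S i) j + INR i * kp * h i (S j)
    + kp * (INR i * x i * (dl i j - dl i (S j)) + INR (S i) * x (S i) * (dl (S i) (S j) - dl (S i) j)).

Lemma C_step lam k l (Hl : 0 < lam) (Hk : (1 <= k)%nat) i j :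
  (forall a b, (a + b < i + j)%nat -> Pc lam k l a b) -> Pc lam k l i j.
Proof.
 intro IH. unfold Pc.
 set (q := qq lam k l). set (h := hfun lam k l). set (x := xlim (INR k / lam)). set (kp := kap lam k).
 set (C := Cv lam k l). set (M := Mm lam k l).
 assert (Hq0 : forall s, Un_cv (fun n => q n s) 0) by (intro; apply q_cv0; auto).
 assert (H1q : forall s, Un_cv (fun n => 1 - q n s) 1).
 { intro s. eapply cv_eq; [apply (CV_minus _ _ _ _ (cv_const 1) (Hq0 s))|intro; reflexivity|ring]. }
 assert (N1 : j = 0%nat \/ Un_cv (fun n => C n (S i) j / INR n) (INR k * h (S i) j)).
 { destruct j as [|j']; [left; reflexivity|right]. apply (IH i j'); lia. }
 assert (N2 : i = 0%nat \/ Un_cv (fun n => C n i (S j) / INR n) (INR k * h i (S j))).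
 { destruct i as [|i']; [left; reflexivity|right]. apply (IH i' j); lia. }
 assert (L1 : Un_cv (fun n => (1 - q n (S i)) * q n j * C n (S i) j) (INR j * kp * (INR k * h (S i) j))).
 { eapply cv_eq; [apply (CV_mult _ _ _ _ (H1q (S i)) (qC lam k l j _ _ Hl Hk N1)) | intro; unfold q; ring | unfold kp; ring]. }
 assert (L2 : Un_cv (fun n => q n i * (1 - q n (S j)) * C n i (S j)) (INR i * kp * (INR k * h i (S j)))).
 { eapply cv_eq; [apply (CV_mult _ _ _ _ (H1q (S j)) (qC lam k l i _ _ Hl Hk N2)) | intro; unfold q; ring | unfold kp; ring]. }
 assert (L3 : Un_cv (fun n => q n i * q n j * C n i j) 0).
 { destruct i as [|i'].
   - eapply cv_eq; [apply (cv_const 0)| intro n; unfold q; rewrite qq0; ring | reflexivity].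
   - destruct j as [|j'].
     + eapply cv_eq; [apply (cv_const 0)| intro n; unfold q; rewrite qq0; ring | reflexivity].
     + assert (Hij : S j' = 0%nat \/ Un_cv (fun n => C n (S i') (S j') / INR n) (INR k * h (S i') (S j'))).
       { right. apply (IH i' j'); lia. }
       eapply cv_eq; [apply (CV_mult _ _ _ _ (Hq0 (S i')) (qC lam k l (S j') _ _ Hl Hk Hij)) | intro; unfold q; ring | ring]. }
 assert (LW : forall m d, Un_cv (fun n => q n m * (1 - q n m) * (M n m + INR k * dl 1 m) * d)
                            (INR m * kp * (INR k * x m) * d)).
 { intros m d. pose proof (qC lam k l m (fun n => M n m) _ Hl Hk (or_intror (M_cv lam k l m Hl Hk))) as Hm.
   pose proof (CV_plus _ _ _ _ Hm (cv_scal (INR k * dl 1 m) _ _ (Hq0 m))) as Hs.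
   pose proof (CV_mult _ _ _ _ (H1q m) Hs) as Hp.
   eapply cv_eq; [apply (cv_scal d _ _ Hp) | intro; unfold q; ring | unfold kp, x; ring]. }
 set (d1 := dl i j - dl i (S j)). set (d2 := dl (S i) (S j) - dl (S i) j).
 set (R0 := INR j * kp * (INR k * h (S i) j) + INR i * kp * (INR k * h i (S j)) + 0
            + (INR i * kp * (INR k * x i) * d1 + INR (S i) * kp * (INR k * x (S i)) * d2)).
 set (a := (INR (S i) + INR (S j)) * kp).
 assert (Hkp : 0 < kp) by (apply kap_pos; auto).
 assert (Ha : 0 < 1 + a) by (unfold a; rewrite !S_INR; pose proof (pos_INR i); pose proof (pos_INR j); nra).
 assert (Hlim : Un_cv (fun n => C n (S i) (S j) / INR n) (R0 / (1 + a))).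
 { apply (lim_lemma (fun n => C n (S i) (S j)) (fun n => (1 - q n (S i)) * (1 - q n (S j)))
     (fun n => (1 - q n (S i)) * q n j * C n (S i) j + q n i * (1 - q n (S j)) * C n i (S j) + q n i * q n j * C n i j
       + (q n i * (1 - q n i) * (M n i + INR k * dl 1 i) * d1 + q n (S i) * (1 - q n (S i)) * (M n (S i) + INR k * dl 1 (S i)) * d2))); auto.
   - destruct (q_ev lam k l (S i) Hl Hk) as [Na Ha1]. destruct (q_ev lam k l (S j) Hl Hk) as [Nb Hb1].
     exists (max Na Nb); intros n Hn. specialize (Ha1 n ltac:(lia)). specialize (Hb1 n ltac:(lia)). split.
     + unfold C, q, M, d1, d2. rewrite C_rec. ring.
     + fold q in Ha1, Hb1. rewrite Rabs_right; [|apply Rle_ge, Rmult_le_pos; lra]. nra.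
   - pose proof (nq_cv lam k l (S i) Hl Hk) as Hi. pose proof (nq_cv lam k l (S j) Hl Hk) as Hj.
     eapply cv_eq; [apply (CV_plus _ _ _ _ (CV_plus _ _ _ _ (CV_opp _ _ Hi) (CV_opp _ _ Hj)) (CV_mult _ _ _ _ Hi (Hq0 (S j))))
        | intro; unfold opp_seq, q; ring | unfold a, kp; ring].
   - eapply cv_eq; [apply (CV_plus _ _ _ _ (CV_plus _ _ _ _ (CV_plus _ _ _ _ L1 L2) L3) (CV_plus _ _ _ _ (LW i d1) (LW (S i) d2)))
        | intro; reflexivity | reflexivity]. }
 assert (Hh : h (S i) (S j) = R0 / (1 + a) / INR k).
 { apply hfun_spec; try lia. apply hn_cv; auto. }
 pose proof (INRk_pos k Hk).
 split.
 - eapply cv_eq; [exact Hlim | intro; reflexivity | rewrite Hh; field; lra].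
 - fold a. rewrite Hh. unfold R0. field. lra.
Qed.

Lemma C_all lam k l (Hl : 0 < lam) (Hk : (1 <= k)%nat) i j : Pc lam k l i j.
Proof.
 remember (i + j)%nat as s eqn:Hs. revert i j Hs.
 induction s as [s IHs] using (well_founded_induction lt_wf).
 intros i j Hs. apply C_step; auto. intros a b Hab. apply (IHs (a + b)%nat); lia.
Qed.

Lemma xn_rate lam k l i : 0 < lam -> (1 <= k)%nat ->
  exists C N, 0 <= C /\ forall n : nat, N <= INR n -> INR n >= 1 /\
    Rabs (xn lam k l i n - xlim (INR k / lam) i) <= C / INR n.
Proof. intros Hl Hk. destruct (M_bd lam k l i Hl Hk) as [K [N HN]].
 pose proof (INRk_pos k Hk).
 exists (Rabs K / INR k), (INR (max N 1)). split.
 { unfold Rdiv; apply Rmult_le_pos; [apply Rabs_pos| left; apply Rinv_0_lt_compat; lra]. }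
 intros n Hn. apply INR_le in Hn. assert (Hn1 : 1 <= INR n) by (apply (le_INR 1); lia). split; [lra|].
 specialize (HN n ltac:(lia)).
 replace (xn lam k l i n - xlim (INR k / lam) i) with
   ((Mm lam k l n i - INR k * xlim (INR k / lam) i * INR n) / (INR n * INR k)).
 2:{ unfold xn, Mm. field. lra. }
 unfold Rdiv. rewrite Rabs_mult, Rabs_inv, (Rabs_right (INR n * INR k)) by nra.
 rewrite Rinv_mult. pose proof (Rle_abs K).
 assert (0 < / INR n) by (apply Rinv_0_lt_compat; lra).
 assert (0 < / INR k) by (apply Rinv_0_lt_compat; lra).
 assert (Rabs (Mm lam k l n i - INR k * xlim (INR k / lam) i * INR n) <= Rabs K) by lra.
 pose proof (Rabs_pos (Mm lam k l n i - INR k * xlim (INR k / lam) i * INR n)).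
 assert (0 < / INR n * / INR k) by (apply Rmult_lt_0_compat; lra).
 apply Rle_trans with (Rabs K * (/ INR n * / INR k)); [nra | right; field; lra].
Qed.

Lemma Cv_sym lam k l n i j : Cv lam k l n i j = Cv lam k l n j i.
Proof. unfold Cv, S2. rewrite (Ex_ext lam k l n (fun st => Xcount i st * Xcount j st) (fun st => Xcount j st * Xcount i st)) by (intro; ring). ring. Qed.

Lemma hn_full lam k l i j : 0 < lam -> (1 <= k)%nat -> (1 <= i)%nat -> (1 <= j)%nat ->
  Un_cv (fun n => hn lam k l i j n) (hfun lam k l i j).
Proof. intros Hl Hk Hi Hj. pose proof (INRk_pos k Hk).
 destruct i as [|i]; [lia|]. destruct j as [|j]; [lia|].
 destruct (C_all lam k l Hl Hk i j) as [Hc _].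
 eapply cv_eq; [apply (hn_cv _ _ _ _ _ _ Hk Hc) | intro; reflexivity | field; lra]. Qed.

Lemma hfun_sym lam k l i j : 0 < lam -> (1 <= k)%nat -> hfun lam k l i j = hfun lam k l j i.
Proof. intros Hl Hk. destruct i as [|i]; destruct j as [|j]; try reflexivity.
 apply (UL_sequence (fun n => hn lam k l (S i) (S j) n)).
 - apply hn_full; auto; lia.
 - eapply cv_eq; [apply (hn_full lam k l (S j) (S i)); auto; lia | intro n; rewrite !hn_eq, Cv_sym; reflexivity | reflexivity]. Qed.

Lemma mom2_eq lam k l i j n : (1 <= k)%nat -> (1 <= n)%nat ->
  mom2 lam k l i j n = hn lam k l i j n / (INR n * INR k) + xn lam k l i n * xn lam k l j n.
Proof. intros Hk Hn. pose proof (INRk_pos k Hk). assert (1 <= INR n) by (apply (le_INR 1); lia).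
 unfold mom2, hn, xn. field. lra. Qed.

Lemma dl_eq a : dl a a = 1. Proof. unfold dl; destruct Nat.eq_dec; [reflexivity|lia]. Qed.
Lemma dl_neq a b : a <> b -> dl a b = 0. Proof. intro; unfold dl; destruct Nat.eq_dec; [lia|reflexivity]. Qed.

Theorem lemma1 (lam : R) (k l : nat) (hlam : 0 < lam) (hk : (1 <= k)%nat)
  (hlk : lam <= INR (k + l)) :
  let alpha := INR k / lam in
  (forall i : nat, (1 <= i)%nat ->
     exists C N : R, forall n : nat, N <= INR n ->
       Rabs (xn lam k l i n - xlim alpha i) <= C / INR n) /\
  (forall i j : nat, (1 <= i)%nat -> (1 <= j)%nat ->
     exists C N : R, forall n : nat, N <= INR n ->
       Rabs (mom2 lam k l i j n - xlim alpha i * xlim alpha j) <= C / INR n) /\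
  (exists h : nat -> nat -> R,
     (forall i j : nat, (1 <= i)%nat -> (1 <= j)%nat ->
        Un_cv (fun n => hn lam k l i j n) (h i j)) /\
     (forall i j : nat, (1 <= i)%nat -> (1 <= j)%nat -> h i j = h j i) /\
     (forall j : nat, h O j = 0 /\ h j O = 0) /\
     (forall i : nat, (1 <= i)%nat ->
        h i i = (2 * INR (i - 1) * h i (i - 1)%nat + INR i * xlim alpha i
                 + INR (i - 1) * xlim alpha (i - 1)) / (2 * INR i + 1 + alpha)) /\
     (forall i : nat, (1 <= i)%nat ->
        h i (i + 1)%nat = (INR (i - 1) * h (i - 1)%nat (i + 1)%nat + INR i * h i i
                           - INR i * xlim alpha i) / (2 * INR i + 2 + alpha)) /\
     (forall i r : nat, (1 <= i)%nat -> (i + 2 <= r)%nat ->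
        h i r = (INR (i - 1) * h (i - 1)%nat r + INR (r - 1) * h i (r - 1)%nat)
                / (INR i + INR r + 1 + alpha)) /\
     (forall i j : nat, (1 <= i)%nat -> (1 <= j)%nat ->
        Un_cv (fun n => INR n * (mom2 lam k l i j n - xn lam k l i n * xn lam k l j n
                                 - h i j / (INR n * INR k))) 0)).
Proof.
 intro alpha. pose proof (INRk_pos k hk) as Hk1.
 assert (Hal : 0 < alpha) by (unfold alpha; apply Rdiv_lt_0_compat; lra).
 assert (Hkp : kap lam k = 1 / (1 + alpha)) by (unfold kap, alpha; field; lra).
 split; [|split].
 - intros i _. destruct (xn_rate lam k l i hlam hk) as [C [N [_ H]]]. exists C, N. intros n Hn. apply H; auto.
 - intros i j Hi Hj.
   destruct (xn_rate lam k l i hlam hk) as [Ci [Ni [HCi Hri]]].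
   destruct (xn_rate lam k l j hlam hk) as [Cj [Nj [HCj Hrj]]].
   destruct (cv_bd _ _ (hn_full lam k l i j hlam hk Hi Hj)) as [B [Nb HB]].
   exists (Ci * (Rabs (xlim alpha j) + Cj) + Rabs (xlim alpha i) * Cj + Rabs B),
     (Rmax (Rmax Ni Nj) (INR (max Nb 1))).
   intros n Hn.
   assert (Hn1 : Ni <= INR n) by (pose proof (Rmax_l Ni Nj); pose proof (Rmax_l (Rmax Ni Nj) (INR (max Nb 1))); lra).
   assert (Hn2 : Nj <= INR n) by (pose proof (Rmax_r Ni Nj); pose proof (Rmax_l (Rmax Ni Nj) (INR (max Nb 1))); lra).
   assert (Hn3 : INR (max Nb 1) <= INR n) by apply (Rle_trans _ _ _ (Rmax_r _ _) Hn).
   apply INR_le in Hn3.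
   destruct (Hri n Hn1) as [Hge Hxi]. destruct (Hrj n Hn2) as [_ Hxj].
   specialize (HB n ltac:(lia)).
   rewrite mom2_eq by (auto; lia).
   set (a := xn lam k l i n) in *. set (b := xn lam k l j n) in *.
   set (xa := xlim alpha i) in *. set (xb := xlim alpha j) in *.
   set (hv := hn lam k l i j n) in *.
   assert (Hnp : 0 < INR n) by lra.
   assert (Hu : INR n * Rabs (a - xa) <= Ci).
   { apply (Rmult_le_compat_l (INR n)) in Hxi; [|lra]. replace (INR n * (Ci / INR n)) with Ci in Hxi by (field; lra). exact Hxi. }
   assert (Hw : INR n * Rabs (b - xb) <= Cj).
   { apply (Rmult_le_compat_l (INR n)) in Hxj; [|lra]. replace (INR n * (Cj / INR n)) with Cj in Hxj by (field; lra). exact Hxj. }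
   assert (Hb : Rabs b <= Rabs xb + Cj).
   { replace b with (xb + (b - xb)) by ring. pose proof (Rabs_triang xb (b - xb)). pose proof (Rabs_pos (b - xb)). nra. }
   assert (Hhv : INR n * Rabs (hv / (INR n * INR k)) <= Rabs B).
   { unfold Rdiv at 1; rewrite Rabs_mult, Rabs_inv, (Rabs_right (INR n * INR k)) by nra. fold (Rdiv (Rabs hv) (INR n * INR k)).
     replace (INR n * (Rabs hv / (INR n * INR k))) with (Rabs hv / INR k) by (field; lra).
     apply div_le; [lra|]. pose proof (Rle_abs B). pose proof (Rabs_pos B). nra. }
   apply (Rmult_le_reg_l (INR n)); [lra|].
   replace (INR n * ((Ci * (Rabs xb + Cj) + Rabs xa * Cj + Rabs B) / INR n)) with (Ci * (Rabs xb + Cj) + Rabs xa * Cj + Rabs B) by (field; lra).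
   replace (hv / (INR n * INR k) + a * b - xa * xb) with (hv / (INR n * INR k) + ((a - xa) * b + xa * (b - xb))) by ring.
   pose proof (Rabs_triang (hv / (INR n * INR k)) ((a - xa) * b + xa * (b - xb))) as T1.
   pose proof (Rabs_triang ((a - xa) * b) (xa * (b - xb))) as T2.
   rewrite !Rabs_mult in T2.
   pose proof (Rabs_pos (a - xa)). pose proof (Rabs_pos b). pose proof (Rabs_pos xa). pose proof (Rabs_pos (b - xb)).
   assert (INR n * (Rabs (a - xa) * Rabs b) <= Ci * (Rabs xb + Cj)).
   { rewrite <- Rmult_assoc. apply Rmult_le_compat; auto. apply Rmult_le_pos; lra. }
   assert (INR n * (Rabs xa * Rabs (b - xb)) <= Rabs xa * Cj).
   { rewrite (Rmult_comm (Rabs xa)), <- Rmult_assoc, (Rmult_comm _ (Rabs xa)). apply Rmult_le_compat_l; auto. }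
   apply Rle_trans with (INR n * (Rabs (hv / (INR n * INR k)) + (Rabs (a - xa) * Rabs b + Rabs xa * Rabs (b - xb)))).
   { apply Rmult_le_compat_l; lra. }
   lra.
 - exists (hfun lam k l).
   assert (Hsym : forall i j, hfun lam k l i j = hfun lam k l j i) by (intros; apply hfun_sym; auto).
   assert (Heq : forall i j, hfun lam k l (S i) (S j) * (1 + (INR (S i) + INR (S j)) * kap lam k) =
    INR j * kap lam k * hfun lam k l (S i) j + INR i * kap lam k * hfun lam k l i (S j)
    + kap lam k * (INR i * xlim alpha i * (dl i j - dl i (S j)) + INR (S i) * xlim alpha (S i) * (dl (S i) (S j) - dl (S i) j))).
   { intros i j. apply (C_all lam k l hlam hk i j). }
   split; [|split; [|split; [|split; [|split; [|split]]]]].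
   + intros; apply hn_full; auto.
   + intros; apply Hsym.
   + intro j; destruct j; split; reflexivity.
   + intros i Hi. destruct i as [|i]; [lia|]. replace (S i - 1)%nat with i by lia.
     specialize (Heq i i). rewrite (Hsym i (S i)), dl_eq, dl_eq, (dl_neq i (S i)), (dl_neq (S i) i) in Heq by lia.
     pose proof (pos_INR i).
     apply (Rmult_eq_reg_r (2 * INR (S i) + 1 + alpha)); [|rewrite S_INR; lra].
     replace (hfun lam k l (S i) (S i) * (2 * INR (S i) + 1 + alpha)) with
       ((1 + alpha) * (hfun lam k l (S i) (S i) * (1 + (INR (S i) + INR (S i)) * kap lam k))) by (rewrite Hkp; field; lra).
     rewrite Heq, Hkp. field. rewrite S_INR. lra.
   + intros i Hi. destruct i as [|i]; [lia|]. replace (S i - 1)%nat with i by lia.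
     replace (S i + 1)%nat with (S (S i)) by lia.
     specialize (Heq i (S i)). rewrite dl_eq, (dl_neq i (S i)), (dl_neq i (S (S i))), (dl_neq (S i) (S (S i))) in Heq by lia.
     pose proof (pos_INR i).
     apply (Rmult_eq_reg_r (2 * INR (S i) + 2 + alpha)); [|rewrite S_INR; lra].
     replace (hfun lam k l (S i) (S (S i)) * (2 * INR (S i) + 2 + alpha)) with
       ((1 + alpha) * (hfun lam k l (S i) (S (S i)) * (1 + (INR (S i) + INR (S (S i))) * kap lam k))) by (rewrite Hkp, !S_INR; field; lra).
     rewrite Heq, Hkp. field. rewrite S_INR. lra.
   + intros i r Hi Hr. destruct i as [|i]; [lia|]. destruct r as [|r]; [lia|].
     replace (S i - 1)%nat with i by lia. replace (S r - 1)%nat with r by lia.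
     specialize (Heq i r). rewrite (dl_neq i r), (dl_neq i (S r)), (dl_neq (S i) (S r)), (dl_neq (S i) r) in Heq by lia.
     pose proof (pos_INR i). pose proof (pos_INR r).
     apply (Rmult_eq_reg_r (INR (S i) + INR (S r) + 1 + alpha)); [|rewrite !S_INR; lra].
     replace (hfun lam k l (S i) (S r) * (INR (S i) + INR (S r) + 1 + alpha)) with
       ((1 + alpha) * (hfun lam k l (S i) (S r) * (1 + (INR (S i) + INR (S r)) * kap lam k))) by (rewrite Hkp; field; lra).
     rewrite Heq, Hkp. field. rewrite !S_INR. lra.
   + intros i j Hi Hj.
     pose proof (hn_full lam k l i j hlam hk Hi Hj) as Hc.
     pose proof (cv_scal (/ INR k) _ _ (CV_minus _ _ _ _ Hc (cv_const (hfun lam k l i j)))) as H2.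
     eapply cv_ext_ev; [|eapply cv_eq; [exact H2 | intro; reflexivity | ring]].
     exists 1%nat; intros n Hn. assert (1 <= INR n) by (apply (le_INR 1); lia).
     rewrite mom2_eq by (auto; lia). field. lra.
Qed.
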